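(* Let $p:[0,1]\to\mathbb{R}_{\ge0}$ be a monotone, continuous, convex pricing function with $p(0)=0$, let $v(x)=\tau x$ with $\tau\ge0$, let $S\subset\mathbb{R}_{\ge0}$ be a finite set with $\tau\in S$, and let $\hat p=\mathrm{disc}(p,S)$. Then for every $b\in\mathbb{R}_{\ge0}$, $r(\hat p\mid v,b)\ge r(p\mid v,b)$.
   Context: Revenue: for a pricing function $q$ and budget $b$, $F=\{x\in[0,1]:q(x)\le b\}$, $u^*=\sup_{x\in F}(v(x)-q(x))$, $\mathrm{Dem}=\{x\in F:v(x)-q(x)=u^*\}$, $r(q\mid v,b)=\sup_{x\in\mathrm{Dem}}q(x)$. For convex $f:[0,1]\to\mathbb{R}$: $f'(x)=\sup_{\delta\in(0,x]}(f(x)-f(x-\delta))/\delta$ for $x>0$, $f'(0)=-\infty$, and $\ell(f\mid\beta)=\max\{x\in[0,1]:f'(x)\le\beta\}$. For non-decreasing $\mathbf{z}\in[0,1]^{k-1}$ and $\boldsymbol\alpha\in\mathbb{R}^k$, with $z_0=0$, $\mathrm{plin}(\mathbf{z},\boldsymbol\alpha)(0)=0$ and for $x>0$, $\mathrm{plin}(\mathbf{z},\boldsymbol\alpha)(x)=\sum_{j=1}^{i-1}\alpha_j(z_j-z_{j-1})+\alpha_i(x-z_{i-1})$, where $i\in[k]$ is largest with $z_{i-1}<x$. For continuous convex $f$ and $S=\{\alpha_1<\dots<\alpha_k\}$: $z_i=\ell(f\mid\alpha_i)$ for $i\in[k-1]$ and $\mathrm{disc}(f,S)=f(0)+\mathrm{plin}(\mathbf{z},\boldsymbol\alpha)$.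 *)

(* Defs.v *)
From mathcomp Require Import all_boot all_order all_algebra.
From mathcomp Require Import all_classical all_reals all_analysis.
Set Implicit Arguments. Unset Strict Implicit. Unset Printing Implicit Defensive.
Import Order.TTheory GRing.Theory Num.Theory.
Local Open Scope classical_set_scope.
Local Open Scope ring_scope.

Section Defs.
Variable R : realType.

Definition feasible (q : R -> R) (b : R) : set R :=
  [set x | 0 <= x <= 1 /\ q x <= b].

Definition opt_utility (q v : R -> R) (b : R) : R :=
  sup [set v x - q x | x in feasible q b].

Definition demand (q v : R -> R) (b : R) : set R :=
  [set x | feasible q b x /\ v x - q x = opt_utility q v b].

Definition revenue (q v : R -> R) (b : R) : R :=
  sup [set q x | x in demand q v b].

Definition lderiv (f : R -> R) (x : R) : \bar R :=
  if x <= 0 then -oo%E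
  else ereal_sup [set ((f x - f (x - d)) / d)%:E | d in [set d | 0 < d <= x]].

(* ell(f | beta) = max {x in [0,1] : f'(x) <= beta}, written as a sup
   (the max exists for convex continuous f) *)
Definition ell (f : R -> R) (beta : R) : R :=
  sup [set x | 0 <= x <= 1 /\ (lderiv f x <= beta%:E)%E].

(* plin(z, alpha)(x), with z_0 = 0, z_1..z_{k-1} given by z, alpha_1..alpha_k *)
Definition plin (z alpha : nat -> R) (k : nat) (x : R) : R :=
  let zz := fun i : nat => if i == 0%N then 0 else z i in
  if x <= 0 then 0
  else
    let i := (\max_(1 <= i < k.+1 | (zz i.-1 < x)%R) i)%N in
    \sum_(1 <= j < i) alpha j * (zz j - zz j.-1) + alpha i * (x - zz i.-1).

(* S = {alpha_1 < ... < alpha_k} given as the strictly increasing list s;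
   alpha_i = nth 0 s (i-1) *)
Definition alpha_of (s : seq R) (i : nat) : R := nth 0 s i.-1.

Definition disc (f : R -> R) (s : seq R) : R -> R :=
  fun x => f 0 + plin (fun i => ell f (alpha_of s i)) (alpha_of s) (size s) x.

End Defs.

(* Main.v *)
Require Import Defs.
From mathcomp Require Import all_boot all_order all_algebra.
From mathcomp Require Import all_classical all_reals all_analysis.
From mathcomp Require Import ring lra zify.
Import Order.TTheory GRing.Theory Num.Theory numFieldNormedType.Exports.
Local Open Scope classical_set_scope.
Local Open Scope ring_scope.
Ltac nlia := repeat match goal with
  | H : is_true (@Order.le _ _ _ _) |- _ => clear H
  | H : is_true (@Order.lt _ _ _ _) |- _ => clear H
  | H : is_true (andb (@Order.le _ _ _ _) _) |- _ => clear H
  | H : forall _ : Real.sort _, _ |- _ => clear H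
  | H : @eq (Real.sort _) _ _ |- _ => clear H
  | H : {within _, continuous _} |- _ => clear H
  | H : is_true (sorted _ _) |- _ => clear H
  | H : is_true (all _ _) |- _ => clear H
  end; lia.
Lemma cont_eps (R : realType) (p : R -> R) (c e : R) :
  {within `[0, 1]%classic, continuous p} -> 0 <= c <= 1 -> 0 < e ->
  exists2 d : R, 0 < d & forall y, 0 <= y <= 1 -> `|c - y| < d -> `|p c - p y| < e.
Proof.
move=> /subspace_continuousP hc Hc e0.
have Hc' : `[0, 1]%classic c by rewrite /= in_itv /=.
move: (hc c Hc') => /cvgrPdist_lt /(_ e e0).
rewrite near_withinE => /nbhs_ballP [d /= d0 H].
exists d => // y Hy cy.
apply: H => /=.
  by rewrite /ball /=.
by rewrite in_itv /=.
Qed.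

Section Ana.
Variable R : realType.
Variable p : R -> R.

Definition Sb (beta : R) := [set x : R | 0 <= x <= 1 /\ (lderiv p x <= beta%:E)%E].

Lemma ellE beta : ell p beta = sup (Sb beta). Proof. by []. Qed.

Lemma Sb0 beta : Sb beta 0.
Proof. by split; [rewrite lexx ler01 | rewrite /lderiv lexx leNye]. Qed.

Lemma Sb_ub beta : has_ubound (Sb beta).
Proof. by exists 1 => x [/andP[_ ->]]. Qed.

Lemma ell_ub beta x : Sb beta x -> x <= ell p beta.
Proof. by move=> Sx; rewrite ellE; apply: ub_le_sup => //; apply: Sb_ub. Qed.

Lemma ell_ge0 beta : 0 <= ell p beta.
Proof. exact/ell_ub/Sb0. Qed.

Lemma ell_le1 beta : ell p beta <= 1.
Proof. rewrite ellE; apply: ge_sup; first by exists 0; apply: Sb0.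
by move=> x [/andP[_ ->]]. Qed.

Lemma ell_mono b1 b2 : b1 <= b2 -> ell p b1 <= ell p b2.
Proof.
move=> b12; rewrite {1}ellE; apply: ge_sup; first by exists 0; apply: Sb0.
move=> x [hx hl]; apply: ell_ub; split => //.
by apply: le_trans hl _; rewrite lee_fin.
Qed.

Lemma ell_approx beta c : c < ell p beta -> exists2 x, Sb beta x & c < x.
Proof. by rewrite ellE => /sup_gt; apply; exists 0; apply: Sb0. Qed.

Lemma lderiv_slope beta x d : 0 < x -> (lderiv p x <= beta%:E)%E ->
  0 < d <= x -> p x - p (x - d) <= beta * d.
Proof.
move=> x0 hl /andP[d0 dx].
have hx0 : (x <= 0) = false by rewrite leNgt x0.
move: hl; rewrite /lderiv hx0 => hl.
have : (((p x - p (x - d)) / d)%:E <= beta%:E)%E.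
  apply: le_trans hl; apply: ereal_sup_ubound; exists d => //.
  by rewrite /= d0 dx.
by rewrite lee_fin ler_pdivrMr // mulrC.
Qed.

Lemma slope_lderiv beta x : 0 < x ->
  (forall d, 0 < d <= x -> p x - p (x - d) <= beta * d) ->
  (lderiv p x <= beta%:E)%E.
Proof.
move=> x0 h; have hx0 : (x <= 0) = false by rewrite leNgt x0.
rewrite /lderiv hx0.
apply: ge_ereal_sup => _ [d /= hd <-].
case/andP: (hd) => d0 _.
by rewrite lee_fin ler_pdivrMr //; apply: h.
Qed.

Hypothesis pconv : forall x y t, 0 <= x <= 1 -> 0 <= y <= 1 -> 0 <= t <= 1 ->
     p (t * x + (1 - t) * y) <= t * p x + (1 - t) * p y.
Hypothesis pcont : {within `[0, 1]%classic, continuous p}.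

Lemma chord a c x : 0 <= a -> a < c -> c < x -> x <= 1 ->
  p c - p a <= (c - a) / (x - a) * (p x - p a).
Proof.
move=> a0 ac cx x1.
have xa : 0 < x - a by rewrite subr_gt0 (lt_trans ac cx).
set t := (c - a) / (x - a).
have t0 : 0 <= t by apply: divr_ge0; lra.
have t1 : t <= 1 by rewrite ler_pdivrMr //; lra.
have ceq : c = t * x + (1 - t) * a.
  rewrite /t; field; exact: lt0r_neq0.
have hh : p c <= t * p x + (1 - t) * p a.
  rewrite {1}ceq; apply: pconv; apply/andP; split; lra.
rewrite mulrBr; lra.
Qed.

Lemma ellE' beta a c : 0 <= beta -> 0 <= a -> a <= c -> c <= 1 -> c <= ell p beta ->
  p c - p a <= beta * (c - a).
Proof.
move=> b0 a0 ac c1 cell.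
rewrite leNgt; apply/negP => hlt.
set eps := p c - p a - beta * (c - a).
have eps0 : 0 < eps by rewrite /eps subr_gt0.
have ac' : a < c.
  rewrite lt_neqAle ac andbT; apply/negP => /eqP eac; move: hlt; rewrite eac; lra.
have c01 : 0 <= c <= 1 by rewrite c1 (le_trans a0 ac).
have [d d0 hd] := @cont_eps R p c (eps / 2) pcont c01 (divr_gt0 eps0 (ltr0n R 2)).
set eta := if d <= c - a then d else c - a.
have eta0 : 0 < eta by rewrite /eta; case: ifP => // _; rewrite subr_gt0.
have etad : eta <= d by rewrite /eta; case: ifP => // /negbT; rewrite -ltNge => /ltW.
have etaca : eta <= c - a by rewrite /eta; case: ifP.
have [x Sx cx] : exists2 x, Sb beta x & c - eta < x.
  apply: ell_approx; apply: lt_le_trans cell; rewrite ltrBlDr ltrDl //.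
case: Sx => /andP[x0' x1] hl.
have ax : a < x by apply: le_lt_trans cx; lra.
have x0 : 0 < x by apply: le_lt_trans ax.
have slx : p x - p a <= beta * (x - a).
  have := @lderiv_slope beta x (x - a) x0 hl.
  have -> : x - (x - a) = a by lra.
  apply; apply/andP; split; lra.
case: (ltP c x) => [cxx|xc].
  have := @chord a c x a0 ac' cxx x1.
  have : (c - a) / (x - a) * (p x - p a) <= (c - a) / (x - a) * (beta * (x - a)).
    by apply: ler_wpM2l => //; rewrite divr_ge0 // subr_ge0 ltW.
  have -> : (c - a) / (x - a) * (beta * (x - a)) = beta * (c - a).
    by field; rewrite subr_eq0 gt_eqF.
  rewrite /eps in hlt; lra.
have hcx : `|c - x| < d.
  rewrite ger0_norm ?subr_ge0 //; apply: lt_le_trans etad; lra.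
have x01 : 0 <= x <= 1 by rewrite x0' x1.
have := hd x x01 hcx.
move=> /(le_lt_trans (ler_norm _)) hp.
have : beta * (x - a) <= beta * (c - a) by apply: ler_wpM2l => //; lra.
move: hp eps0; rewrite /eps; lra.
Qed.

End Ana.
Lemma bigmax_mem (r : seq nat) (P : pred nat) : has P r ->
  ((\max_(i <- r | P i) i) \in r) && P (\max_(i <- r | P i) i).
Proof.
elim: r => // a t IH /=; rewrite big_cons.
case Pa: (P a) => /=.
  case hP: (has P t).
    move/andP: (IH hP) => [mt Pm].
    rewrite /maxn; case: ltnP => _.
      by rewrite inE mt orbT Pm.
    by rewrite inE eqxx Pa.
  rewrite big_hasC ?hP // maxn0 inE eqxx Pa //.
move=> hP; move/andP: (IH hP) => [mt Pm].
by rewrite inE mt orbT Pm.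
Qed.

Definition mn {R : realType} (x c : R) := if x <= c then x else c.

Lemma plinG (R : realType) (z alpha Z : nat -> R) (k : nat) (x : R) :
  (0 < k)%N -> Z 0%N = 0 -> Z k = 1 ->
  (forall i, (0 < i < k)%N -> Z i = z i) ->
  (forall i j, (i <= j <= k)%N -> Z i <= Z j) ->
  0 <= x <= 1 ->
  plin z alpha k x = \sum_(1 <= i < k.+1) alpha i * (mn x (Z i) - mn x (Z i.-1)).
Proof.
move=> k0 Z0 Zk Zz Zmono /andP[x0 x1].
have Zge0 : forall i, (i <= k)%N -> 0 <= Z i.
  by move=> i ik; rewrite -Z0; apply: Zmono; rewrite leq0n ik.
rewrite /plin /=.
case: (lerP x 0) => [xle0|xgt0].
  have -> : x = 0 by apply/le_anti; rewrite xle0 x0.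
  rewrite big_nat big1 // => i /andP[i1 ik].
  rewrite /mn !Zge0 ?subrr ?mulr0 //; lia.
set P := (fun i : nat => (if i.-1 == 0%N then 0 else z i.-1) < x).
have zzZ : forall i, (i < k)%N -> (if i == 0%N then 0 else z i) = Z i.
  by move=> i ik; case: eqP => [->|/eqP i0] //; rewrite Zz // lt0n i0.
have hP1 : has P (index_iota 1 k.+1).
  apply/hasP; exists 1%N; first by rewrite mem_index_iota; lia.
  by rewrite /P /=.
move/andP: (@bigmax_mem _ P hP1).
rewrite -/P.
set m := (\max_(i <- index_iota 1 k.+1 | P i) i)%N.
move=> [mr Pm].
move: mr; rewrite mem_index_iota ltnS => /andP[m1 mk].
have Pm' : Z m.-1 < x.
  by move: Pm; rewrite /P -zzZ //; lia.
have above : forall i, (m < i <= k)%N -> x <= Z i.-1.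
  move=> i /andP[mi ik]; rewrite leNgt; apply/negP => hi.
  have : (i <= m)%N.
    apply: leq_bigmax_seq; first by rewrite mem_index_iota; lia.
    rewrite /P zzZ //; lia.
  by rewrite leqNgt mi.
rewrite [RHS](big_cat_nat _ (n:=m)) /=; [|lia|lia].
rewrite [X in _ = _ + X]big_ltn; last by lia.
have -> : \sum_(m.+1 <= i < k.+1) alpha i * (mn x (Z i) - mn x (Z i.-1)) = 0.
  rewrite big_nat big1 // => i /andP[mi ik]; rewrite ltnS in ik.
  have h1 : x <= Z i.-1 by apply: above; rewrite mi ik.
  have h2 : x <= Z i by apply: le_trans h1 _; apply: Zmono; rewrite leq_pred ik.
  by rewrite /mn h1 h2 subrr mulr0.
rewrite addr0.
congr (_ + _).
  rewrite !big_nat; apply: eq_bigr => i /andP[i1 im].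
  have ik : (i < k)%N by apply: leq_trans im _.
  have hZi : Z i < x by apply: le_lt_trans Pm'; apply: Zmono; lia.
  have hZi1 : Z i.-1 < x by apply: le_lt_trans hZi; apply: Zmono; lia.
  rewrite /mn !leNgt hZi hZi1 /= zzZ // zzZ //; lia.
rewrite zzZ; last by lia.
have hm : x <= Z m.
  case: (ltnP m k) => [mlt|mge].
    by have := above m.+1; rewrite /= leqnn mlt; apply.
  have mk' : m = k by apply/eqP; rewrite eqn_leq mk mge.
  by rewrite mk' Zk.
by rewrite /mn hm leNgt Pm'.
Qed.
Section Gen.
Variable R : realType.

Lemma mn_hi (x c : R) : x <= c -> mn x c = x.
Proof. by rewrite /mn => ->. Qed.

Lemma mn_lo (x c : R) : c <= x -> mn x c = c.
Proof. by rewrite /mn => h; case: ifP => // h'; apply/le_anti; rewrite h h'. Qed.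

Lemma mn_le (x c : R) : mn x c <= x /\ mn x c <= c.
Proof. rewrite /mn; case: ifP => h; [by rewrite lexx h | ].
by move/negbT: h; rewrite -ltNge => h; rewrite lexx ltW. Qed.

Lemma mn_mono_diff (x y a c : R) : x <= y -> a <= c ->
  mn y a - mn x a <= mn y c - mn x c.
Proof.
move=> xy ac; rewrite /mn.
case: (lerP y a) => h1; case: (lerP x a) => h2; case: (lerP y c) => h3;
  case: (lerP x c) => h4; lra.
Qed.

Lemma tele (f : nat -> R) n : \sum_(1 <= i < n.+1) (f i - f i.-1) = f n - f 0%N.
Proof. by rewrite big_add1 /= telescope_sumr. Qed.

Lemma demand_max (q v : R -> R) b y0 : feasible q b y0 ->
  (forall y, feasible q b y -> v y - q y <= v y0 - q y0) -> demand q v b y0.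
Proof.
move=> fy0 hmax; split => //; rewrite /opt_utility.
apply/le_anti/andP; split.
  apply: ub_le_sup; last by exists y0.
  by exists (v y0 - q y0) => _ [y fy <-]; apply: hmax.
by apply: ge_sup; [exists (v y0 - q y0); exists y0 | move=> _ [y fy <-]; apply: hmax].
Qed.

Lemma revenue_ge (q v : R -> R) b y0 : demand q v b y0 -> q y0 <= revenue q v b.
Proof.
move=> dy; apply: ub_le_sup; last by exists y0.
by exists b => _ [y [[_ qb] _] <-].
Qed.

Lemma revenue_le (q v : R -> R) b c : 0 <= c ->
  (forall x, demand q v b x -> q x <= c) -> revenue q v b <= c.
Proof.
move=> c0 h; rewrite /revenue.
have [ne|e] := pselect ([set q x | x in demand q v b] !=set0).
  by apply: ge_sup => // _ [x dx <-]; apply: h.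
suff -> : [set q x | x in demand q v b] = set0 by rewrite sup0.
by apply/eqP/negPn/negP => /set0P.
Qed.
End Gen.
Arguments mn_hi {R x c}. Arguments mn_lo {R x c}.
Arguments mn_le {R}.
Section Main.
Variable R : realType.
Variables (p : R -> R) (tau : R) (s : seq R) (b : R).
Hypothesis p0 : forall x, 0 <= x <= 1 -> 0 <= p x.
Hypothesis pmono : forall x y, 0 <= x <= 1 -> 0 <= y <= 1 -> x <= y -> p x <= p y.
Hypothesis pcont : {within `[0, 1]%classic, continuous p}.
Hypothesis pconv : forall x y t, 0 <= x <= 1 -> 0 <= y <= 1 -> 0 <= t <= 1 ->
     p (t * x + (1 - t) * y) <= t * p x + (1 - t) * p y.
Hypothesis pz : p 0 = 0.
Hypothesis tau0 : 0 <= tau.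
Hypothesis ssort : sorted <%R s.
Hypothesis spos : all (fun a => 0 <= a) s.
Hypothesis taus : tau \in s.
Hypothesis b0 : 0 <= b.

Local Notation k := (size s).
Local Notation al := (alpha_of s).

Lemma k0 : (0 < k)%N.
Proof. by rewrite lt0n size_eq0; apply/eqP => e; move: taus; rewrite e in_nil. Qed.

Lemma al_ge0 i : 0 <= al i.
Proof.
rewrite /alpha_of; case: (ltnP i.-1 k) => h.
  by apply: (allP spos); apply: mem_nth.
by rewrite nth_default.
Qed.

Lemma al_mono i j : (0 < i)%N -> (i <= j <= k)%N -> al i <= al j.
Proof.
move=> i0 /andP[ij jk]; rewrite /alpha_of.
case e: (i == j); first by rewrite (eqP e).
apply: ltW; apply: (sorted_ltn_nth lt_trans) => //; rewrite ?inE /=.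
- nlia.
- nlia.
- move/negbT: e => e; nlia.
Qed.

Definition j0 := index tau s.
Lemma j0k : (j0 < k)%N. Proof. by rewrite index_mem. Qed.
Lemma al_j0 : al j0.+1 = tau. Proof. by rewrite /alpha_of /= nth_index. Qed.

Lemma al_k : tau <= al k.
Proof. rewrite -al_j0; apply: al_mono => //; have := j0k; nlia. Qed.

Lemma al_gt i : (0 < i <= k)%N -> tau < al i -> (1 < i)%N /\ tau <= al i.-1.
Proof.
move=> /andP[i0 ik] hlt.
have hj : (j0.+1 < i)%N.
  rewrite ltnNge; apply/negP => hi.
  have : al i <= al j0.+1 by apply: al_mono => //; have := j0k; nlia.
  by rewrite al_j0 leNgt hlt.
split; first nlia.
rewrite -al_j0; apply: al_mono => //; nlia.
Qed.

Definition Z (i : nat) : R := if i == 0%N then 0 else if (i < k)%N then ell p (al i) else 1.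

Lemma Z0 : Z 0%N = 0. Proof. by []. Qed.
Lemma Zk : Z k = 1. Proof. by rewrite /Z ltnn; have := k0; case: (k). Qed.
Lemma Zz i : (0 < i < k)%N -> Z i = ell p (al i).
Proof. by move=> /andP[i0 ik]; rewrite /Z ik; case: eqP => // e; move: i0; rewrite e. Qed.
Lemma Z01 i : 0 <= Z i <= 1.
Proof.
rewrite /Z; case: eqP => _; first by rewrite lexx ler01.
by case: ifP => _; [rewrite ell_ge0 ell_le1 | rewrite ler01 lexx].
Qed.
Lemma Zmono i j : (i <= j <= k)%N -> Z i <= Z j.
Proof.
move=> /andP[ij jk].
case: (posnP i) => [->|i0]; first by rewrite Z0; case/andP: (Z01 j).
case: (ltnP j k) => jk'.
  rewrite !Zz; [|nlia|nlia]; apply: ell_mono; apply: al_mono => //; nlia.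
have -> : j = k by nlia.
by rewrite Zk; case/andP: (Z01 i).
Qed.

Definition G (x : R) := \sum_(1 <= i < k.+1) al i * (mn x (Z i) - mn x (Z i.-1)).

Lemma qG x : 0 <= x <= 1 -> disc p s x = G x.
Proof.
move=> x01; rewrite /disc pz add0r; apply: plinG => //.
- exact: k0.
- exact: Zk.
- by move=> i hi; rewrite Zz.
- exact: Zmono.
Qed.

Definition L (x y : R) (i : nat) :=
  (mn y (Z i) - mn y (Z i.-1)) - (mn x (Z i) - mn x (Z i.-1)).

Lemma L_ge0 x y i : x <= y -> (i <= k)%N -> 0 <= L x y i.
Proof.
move=> xy ik; rewrite /L.
have hz : Z i.-1 <= Z i by apply: Zmono; rewrite leq_pred ik.
have := @mn_mono_diff R x y (Z i.-1) (Z i) xy hz; lra.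
Qed.

Lemma sumL x y : 0 <= x -> x <= y -> y <= 1 -> \sum_(1 <= i < k.+1) L x y i = y - x.
Proof.
move=> x0 xy y1.
rewrite (eq_bigr (fun i => (mn y (Z i) - mn x (Z i)) - (mn y (Z i.-1) - mn x (Z i.-1)))).
  rewrite tele Zk Z0 (mn_hi y1) (mn_hi (le_trans xy y1)) (mn_lo (le_trans x0 xy)) (mn_lo x0).
  lra.
by move=> i _; rewrite /L; lra.
Qed.

Lemma Gdiff x y : G y - G x = \sum_(1 <= i < k.+1) al i * L x y i.
Proof.
rewrite /G -sumrB; apply: eq_bigr => i _; rewrite /L; ring.
Qed.

Lemma mn_ge0 (x c : R) : 0 <= x -> 0 <= c -> 0 <= mn x c.
Proof. by rewrite /mn; case: ifP. Qed.

Lemma mn_monoc (x a c : R) : a <= c -> mn x a <= mn x c.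
Proof. rewrite /mn => ac; case: (lerP x a) => h1; case: (lerP x c) => h2; lra. Qed.

Lemma G_mono x y : 0 <= x -> x <= y -> y <= 1 -> G x <= G y.
Proof.
move=> x0 xy y1; rewrite -subr_ge0 Gdiff big_nat; apply: sumr_ge0 => i /andP[_ ik].
by apply: mulr_ge0; [exact: al_ge0 | apply: L_ge0].
Qed.

Lemma G0 : G 0 = 0.
Proof.
rewrite /G big_nat big1 // => i _.
by rewrite !mn_hi ?subrr ?mulr0 //; case/andP: (Z01 i.-1); case/andP: (Z01 i).
Qed.

Lemma Lip x y : 0 <= x -> x <= y -> y <= 1 -> G y - G x <= al k * (y - x).
Proof.
move=> x0 xy y1; rewrite Gdiff -sumL // mulr_sumr !big_nat; apply: ler_sum => i /andP[i1 ik].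
apply: ler_wpM2r; first by apply: L_ge0.
by apply: al_mono => //; nlia.
Qed.

Definition w := ell p tau.
Lemma w01 : 0 <= w <= 1. Proof. by rewrite ell_ge0 ell_le1. Qed.

Lemma U_diff x y : 0 <= x -> x <= y -> y <= 1 ->
  (tau * y - G y) - (tau * x - G x) = \sum_(1 <= i < k.+1) (tau - al i) * L x y i.
Proof.
move=> x0 xy y1.
rewrite (eq_bigr (fun i => tau * L x y i - al i * L x y i)); last by move=> i _; ring.
rewrite sumrB -mulr_sumr sumL // -Gdiff; ring.
Qed.

Lemma U1 x y : 0 <= x -> x <= y -> y <= w -> tau * x - G x <= tau * y - G y.
Proof.
move=> x0 xy yw; have [w0 w1] := andP w01.
rewrite -subr_ge0 U_diff ?(le_trans yw) // big_nat; apply: sumr_ge0 => i /andP[i1 ik].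
rewrite ltnS in ik.
case: (lerP (al i) tau) => h.
  by apply: mulr_ge0; [rewrite subr_ge0 | apply: L_ge0].
have hik : (0 < i <= k)%N by rewrite i1 ik.
have [i2 hal] := @al_gt i hik h.
have hz : y <= Z i.-1.
  have hi : (0 < i.-1 < k)%N by nlia.
  rewrite (@Zz i.-1 hi); exact: le_trans yw (@ell_mono R p tau (al i.-1) hal).
have hz' : Z i.-1 <= Z i by apply: Zmono; nlia.
rewrite /L !mn_hi ?subrr ?mulr0 //.
- exact: le_trans xy hz.
- exact: le_trans (le_trans xy hz) hz'.
- exact: le_trans hz hz'.
Qed.

Lemma U2 x y : w <= x -> x <= y -> y <= 1 -> tau * y - G y <= tau * x - G x.
Proof.
move=> wx xy y1; have [w0 w1] := andP w01.
have x0 : 0 <= x by apply: le_trans wx.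
rewrite -subr_le0 U_diff // -oppr_ge0 -sumrN big_nat; apply: sumr_ge0 => i /andP[i1 ik].
rewrite ltnS in ik.
case: (lerP tau (al i)) => h.
  rewrite -mulNr opprB; apply: mulr_ge0; [by rewrite subr_ge0 | by apply: L_ge0].
have ik' : (i < k)%N.
  rewrite ltn_neqAle ik andbT; apply/negP => /eqP e.
  by move: h; rewrite e ltNge al_k.
have hz : Z i <= x.
  have hi : (0 < i < k)%N by nlia.
  rewrite (@Zz i hi); exact: le_trans (@ell_mono R p (al i) tau (ltW h)) wx.
have hz' : Z i.-1 <= Z i by apply: Zmono; nlia.
have a1 : Z i <= y by exact: le_trans hz xy.
have a2 : Z i.-1 <= y by exact: le_trans hz' a1.
have a3 : Z i.-1 <= x by exact: le_trans hz' hz.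
by rewrite /L (mn_lo a1) (mn_lo hz) (mn_lo a2) (mn_lo a3) !subrr mulr0 oppr0.
Qed.

Lemma pw : p w <= G w.
Proof.
have [w0 w1] := andP w01.
have -> : p w = \sum_(1 <= i < k.+1) (p (mn w (Z i)) - p (mn w (Z i.-1))).
  by rewrite tele Zk Z0 (mn_hi w1) (mn_lo w0) pz subr0.
rewrite /G !big_nat; apply: ler_sum => i /andP[i1 ik]; rewrite ltnS in ik.
have hz' : Z i.-1 <= Z i by apply: Zmono; nlia.
have Za : 0 <= Z i.-1 by case/andP: (Z01 i.-1).
apply: (@ellE' R p pconv pcont (al i)).
- exact: al_ge0.
- exact: mn_ge0.
- exact: mn_monoc.
- exact: le_trans (proj1 (mn_le w (Z i))) w1.
- case: (ltnP i k) => ik'.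
    have hi : (0 < i < k)%N by nlia.
    by rewrite -(@Zz i hi); exact: (proj2 (mn_le w (Z i))).
  have -> : i = k by nlia.
  apply: le_trans (proj1 (mn_le w (Z k))) _.
  exact: (@ell_mono R p tau (al k) al_k).
Qed.

Lemma demand_p x : demand p (fun x => tau * x) b x -> [/\ 0 <= x <= 1, p x <= b & x <= w].
Proof.
move=> [[x01 pxb] hopt]; split => //.
apply: ell_ub; split => //.
case: (lerP x 0) => hx.
  by rewrite /lderiv hx leNye.
apply: slope_lderiv => // d /andP[d0 dx].
have [x0 x1] := andP x01.
have fd : feasible p b (x - d).
  split; first by apply/andP; split; lra.
  apply: le_trans pxb; apply: pmono; [apply/andP; split; lra | done | lra].
have : tau * (x - d) - p (x - d) <= opt_utility p (fun x => tau * x) b.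
  apply: ub_le_sup; last by exists (x - d).
  exists tau => _ [y [/andP[y0 y1] _] <-].
  have : tau * y <= tau by rewrite -{2}(mulr1 tau); apply: ler_wpM2l.
  have := @p0 y (introT andP (conj y0 y1)); lra.
rewrite -hopt mulrBr; lra.
Qed.

Lemma pos_min (a c : R) : 0 < a -> 0 < c -> exists e, [/\ 0 < e, e <= a & e <= c].
Proof.
move=> a0 c0; case: (lerP a c) => h; [exists a | exists c]; split => //; exact: ltW.
Qed.

Lemma main_sec : revenue (disc p s) (fun x => tau * x) b >= revenue p (fun x => tau * x) b.
Proof.
have [w0 w1] := andP w01.
have ak0 : 0 <= al k := al_ge0 k.
set V := fun x : R => tau * x.
set q := disc p s.
have qGx : forall x, 0 <= x <= 1 -> q x = G x by move=> x hx; apply: qG.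
suff [y0 [dy hy qy0]] : exists y0, [/\ demand q V b y0, forall x, demand p V b x -> p x <= q y0 & 0 <= q y0].
  exact: le_trans (@revenue_le R p V b (q y0) qy0 hy) (@revenue_ge R q V b y0 dy).
case: (lerP (q w) b) => hqw.
  exists w; split.
  - apply: (@demand_max R); first by split => //; rewrite w0 w1.
    move=> y [/andP[y0 y1] _]; rewrite /V !qGx ?w0 ?w1 ?y0 ?y1 //.
    case: (lerP y w) => hyw; first by apply: U1.
    by apply: U2 => //; apply: ltW.
  - move=> x /demand_p [x01 _ xw].
    rewrite qGx ?w0 ?w1 //; apply: le_trans pw.
    by apply: pmono => //; rewrite w0 w1.
  - by rewrite qGx ?w0 ?w1 // -G0; apply: G_mono.
set Y := feasible q b.
have Y0 : Y 0 by split; [rewrite lexx ler01 | rewrite qGx ?lexx ?ler01 // G0].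
have Yw : forall y, Y y -> y < w.
  move=> y [/andP[y0 y1] qy]; rewrite ltNge; apply/negP => wy.
  have : G w <= G y by apply: G_mono.
  by move: hqw qy; rewrite !qGx ?w0 ?w1 ?y0 ?y1 //; lra.
have ubY : has_ubound Y by exists 1 => y [/andP[_ ->]].
set yb := sup Y.
have yb0 : 0 <= yb by apply: ub_le_sup.
have ybw : yb <= w by apply: ge_sup; [exists 0 | move=> y /Yw /ltW].
have yb1 : yb <= 1 by apply: le_trans w1.
have yb01 : 0 <= yb <= 1 by rewrite yb0 yb1.
have hsup : has_sup Y by split => //; exists 0.
have hle : G yb <= b.
  rewrite leNgt; apply/negP => hlt.
  set e := (G yb - b) / (al k + 1).
  have ak1 : 0 < al k + 1 by lra.
  have e0 : 0 < e by apply: divr_gt0 => //; lra.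
  have he : (al k + 1) * e = G yb - b by rewrite /e; field; lra.
  have [y Yy hy] := sup_adherent e0 hsup.
  have yyb : y <= yb by apply: ub_le_sup.
  case: (Yy) => /andP[y0 y1] qy; rewrite qGx ?y0 ?y1 // in qy.
  have := @Lip y yb y0 yyb yb1.
  have : al k * (yb - y) <= al k * e by apply: ler_wpM2l => //; rewrite /yb; lra.
  move: he; rewrite mulrDl mul1r; lra.
have hge : b <= G yb.
  rewrite leNgt; apply/negP => hlt.
  have ybw' : yb < w.
    rewrite lt_neqAle ybw andbT; apply/negP => /eqP ew.
    by move: hqw; rewrite qGx ?w0 ?w1 // -ew; lra.
  set e := (b - G yb) / (al k + 1).
  have ak1 : 0 < al k + 1 by lra.
  have e0 : 0 < e by apply: divr_gt0 => //; lra.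
  have he : (al k + 1) * e = b - G yb by rewrite /e; field; lra.
  have [eta [eta0 etaw etae]] := @pos_min (w - yb) e (ltac:(lra)) e0.
  have hy1 : yb + eta <= 1 by lra.
  have hyb : yb <= yb + eta by lra.
  have := @Lip yb (yb + eta) yb0 hyb hy1.
  have : al k * (yb + eta - yb) <= al k * e by apply: ler_wpM2l => //; lra.
  move=> h1 h2.
  have Yy : Y (yb + eta).
    split; first by apply/andP; split; lra.
    rewrite qGx; last by apply/andP; split; lra.
    move: he; rewrite mulrDl mul1r; lra.
  have : yb + eta <= yb by apply: ub_le_sup.
  lra.
exists yb; split.
- apply: (@demand_max R); first by split => //; rewrite qGx.
  move=> y fy; case: (fy) => /andP[y0 y1] qy; rewrite /V !qGx ?y0 ?y1 //.
  apply: U1 => //; exact: (ub_le_sup ubY).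
- move=> x /demand_p [_ pxb _]; rewrite qGx //; lra.
- rewrite qGx //; exact: le_trans b0 hge.
Qed.

End Main.

Theorem mainTheorem17 (R : realType) (p : R -> R) (tau : R) (s : seq R) (b : R) :
  (forall x, 0 <= x <= 1 -> 0 <= p x) ->
  (forall x y, 0 <= x <= 1 -> 0 <= y <= 1 -> x <= y -> p x <= p y) ->
  {within `[0, 1]%classic, continuous p} ->
  (forall x y t, 0 <= x <= 1 -> 0 <= y <= 1 -> 0 <= t <= 1 ->
     p (t * x + (1 - t) * y) <= t * p x + (1 - t) * p y) ->
  p 0 = 0 ->
  0 <= tau ->
  sorted <%R s -> all (fun a => 0 <= a) s -> tau \in s ->
  0 <= b ->
  revenue (disc p s) (fun x => tau * x) b >= revenue p (fun x => tau * x) b.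
Proof.
move=> H1 H2 H3 H4 H5 H6 H7 H8 H9 H10.
by apply: main_sec.
Qed.
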